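(* Let $P$ be a minimal Fano polytope in $\mathbb{R}^3$ with vertex set $\{x_1,x_2,x_3,y_1,-y_1\}$ such that $x_1,x_2,x_3$ are the vertices of a Fano triangle. Then, up to the action of $GL(3,\mathbb{Z})$, $P$ is the convex hull of either $\{(1,0,0),(0,1,0),(-1,-1,0),(0,0,1),(0,0,-1)\}$ or $\{(1,0,0),(0,1,0),(-1,-1,0),(1,2,3),(-1,-2,-3)\}$.
   Context: A Fano polytope is a convex polytope $P\subset\mathbb{R}^3$ with vertices in $\mathbb{Z}^3$ such that the only lattice point of $P$ that is not a vertex is the origin, which lies strictly in the interior of $P$. A Fano polytope with vertex set $\{x_1,\ldots,x_k\}$ is minimal if for every $j$ the convex hull of $\{x_1,\ldots,x_k\}\setminus\{x_j\}$ is not a Fano polytope. A Fano triangle is a triangle with vertices in $\mathbb{Z}^3$ lying in a plane through the origin, whose only lattice point other than its vertices is the origin, which lies in its relative interior. *)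

(* Defs.v *)
(* Points of Z^3 are integer row vectors 'rV[int]_3;
   convex geometry is done over the rationals. *)
From HB Require Import structures.
From mathcomp Require Import all_boot all_order all_algebra.
Set Implicit Arguments. Unset Strict Implicit. Unset Printing Implicit Defensive.
Import Order.TTheory GRing.Theory Num.Theory.
Local Open Scope ring_scope.

Definition pt := 'rV[int]_3.

Definition toQ (x : pt) : 'rV[rat]_3 := map_mx (fun z : int => z%:~R) x.

Definition in_conv (S : seq pt) (x : 'rV[rat]_3) : Prop :=
  exists w : 'I_(size S) -> rat,
    [/\ forall i, 0 <= w i,
        \sum_i w i = 1 &
        \sum_i w i *: toQ (nth 0 S i) = x].

Definition in_interior (S : seq pt) (x : 'rV[rat]_3) : Prop :=
  exists eps : rat, 0 < eps /\
    forall v : 'rV[rat]_3, (forall i, `|v 0 i| <= eps) -> in_conv S (x + v).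

Definition vertex_set (S : seq pt) : Prop :=
  forall v, v \in S -> ~ in_conv (filter (fun u => u != v) S) (toQ v).

Definition fano (S : seq pt) : Prop :=
  [/\ vertex_set S,
      (forall z : pt, in_conv S (toQ z) -> z \in S \/ z = 0) &
      in_interior S 0].

Definition minimal_fano (S : seq pt) : Prop :=
  fano S /\ forall v, v \in S -> ~ fano (filter (fun u => u != v) S).

Definition fano_triangle (a b c : pt) : Prop :=
  [/\ \rank (col_mx (toQ b - toQ a) (toQ c - toQ a)) = 2%N,
      \det (col_mx (toQ a) (col_mx (toQ b) (toQ c))) = 0,    (* plane through 0 *)
      (exists wa wb wc : rat, [/\ 0 < wa, 0 < wb, 0 < wc, wa + wb + wc = 1 &
            wa *: toQ a + wb *: toQ b + wc *: toQ c = 0])    (* 0 in relative interior *)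
    & (forall z : pt, in_conv [:: a; b; c] (toQ z) ->
         [\/ z = a, z = b, z = c | z = 0])].

Definition mkpt (a b c : int) : pt := \row_(i < 3) [:: a; b; c]`_i.

Definition P1 : seq pt :=
  [:: mkpt 1 0 0; mkpt 0 1 0; mkpt (-1) (-1) 0; mkpt 0 0 1; mkpt 0 0 (-1)].
Definition P2 : seq pt :=
  [:: mkpt 1 0 0; mkpt 0 1 0; mkpt (-1) (-1) 0; mkpt 1 2 3; mkpt (-1) (-2) (-3)].

Definition actGL (A : 'M[int]_3) (S : seq pt) : seq pt := map (fun x => x *m A) S.

(* Main.v *)
Require Import Defs.
From HB Require Import structures.
From mathcomp Require Import all_boot all_order all_algebra.
From mathcomp Require Import lra zify ring.
Set Implicit Arguments. Unset Strict Implicit. Unset Printing Implicit Defensive.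
Import Order.TTheory GRing.Theory Num.Theory.
Local Open Scope ring_scope.

Ltac qlra := repeat match goal with
  | H : is_true (?x <= _) |- _ => let T := type of x in constr_eq T int; clear H
  | H : is_true (?x < _) |- _ => let T := type of x in constr_eq T int; clear H
  | H : @eq int _ _ |- _ => clear H
  end; lra.

Definition i0 : 'I_3 := @Ordinal 3 0 isT.
Definition i1 : 'I_3 := @Ordinal 3 1 isT.
Definition i2 : 'I_3 := @Ordinal 3 2 isT.

Lemma ord3P (P : 'I_3 -> Prop) : P i0 -> P i1 -> P i2 -> forall i, P i.
Proof.
move=> H0 H1 H2 [[|[|[|k]]] Hk] //.
- by rewrite (_ : Ordinal Hk = i0) //; apply: val_inj.
- by rewrite (_ : Ordinal Hk = i1) //; apply: val_inj.
- by rewrite (_ : Ordinal Hk = i2) //; apply: val_inj.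
Qed.

Lemma row3P (R : Type) (u v : 'rV[R]_3) :
  u 0 i0 = v 0 i0 -> u 0 i1 = v 0 i1 -> u 0 i2 = v 0 i2 -> u = v.
Proof. by move=> H0 H1 H2; apply/rowP; elim/ord3P. Qed.

Lemma mul3 (R : pzRingType) (x : 'rV[R]_3) (M : 'M[R]_3) j :
  (x *m M) 0 j = x 0 i0 * M i0 j + x 0 i1 * M i1 j + x 0 i2 * M i2 j.
Proof.
rewrite mxE !big_ord_recl big_ord0 addr0 addrA.
have -> : lift ord0 ord0 = i1 :> 'I_3 by apply: val_inj.
have -> : lift ord0 (lift ord0 ord0) = i2 :> 'I_3 by apply: val_inj.
by have -> : ord0 = i0 :> 'I_3 by apply: val_inj.
Qed.

Definition rpt (a b c : rat) : 'rV[rat]_3 := \row_(i < 3) [:: a; b; c]`_i.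

Lemma mkpt0 a b c : mkpt a b c 0 i0 = a. Proof. by rewrite mxE. Qed.
Lemma mkpt1 a b c : mkpt a b c 0 i1 = b. Proof. by rewrite mxE. Qed.
Lemma mkpt2 a b c : mkpt a b c 0 i2 = c. Proof. by rewrite mxE. Qed.
Lemma rpt0 a b c : rpt a b c 0 i0 = a. Proof. by rewrite mxE. Qed.
Lemma rpt1 a b c : rpt a b c 0 i1 = b. Proof. by rewrite mxE. Qed.
Lemma rpt2 a b c : rpt a b c 0 i2 = c. Proof. by rewrite mxE. Qed.

Lemma ptE (x : pt) : x = mkpt (x 0 i0) (x 0 i1) (x 0 i2).
Proof. by apply: row3P; rewrite ?mkpt0 ?mkpt1 ?mkpt2. Qed.

Lemma toQE (x : pt) i : toQ x 0 i = (x 0 i)%:~R.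
Proof. by rewrite mxE. Qed.

Lemma toQ_mkpt a b c : toQ (mkpt a b c) = rpt a%:~R b%:~R c%:~R.
Proof. by apply: row3P; rewrite !toQE ?mkpt0 ?mkpt1 ?mkpt2 ?rpt0 ?rpt1 ?rpt2. Qed.

Lemma toQD (x y : pt) : toQ (x + y) = toQ x + toQ y.
Proof. by apply/rowP => i; rewrite !mxE intrD. Qed.
Lemma toQN (x : pt) : toQ (- x) = - toQ x.
Proof. by apply/rowP => i; rewrite !mxE intrN. Qed.
Lemma toQB (x y : pt) : toQ (x - y) = toQ x - toQ y.
Proof. by rewrite toQD toQN. Qed.
Lemma toQZ (k : int) (x : pt) : toQ (k *: x) = k%:~R *: toQ x.
Proof. by apply/rowP => i; rewrite !mxE intrM. Qed.
Lemma toQ0 : toQ 0 = 0.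
Proof. by apply/rowP => i; rewrite !mxE. Qed.
Lemma toQ_inj (x y : pt) : toQ x = toQ y -> x = y.
Proof.
move=> H; apply/rowP => i; apply: (@intr_inj rat).
by rewrite -!toQE H.
Qed.

Definition toQm (A : 'M[int]_3) : 'M[rat]_3 := map_mx (fun z : int => z%:~R) A.

Lemma toQ_mul (x : pt) (A : 'M[int]_3) : toQ (x *m A) = toQ x *m toQm A.
Proof.
apply/rowP => j; rewrite mul3 toQE mul3 !toQE !mxE.
by rewrite !intrD !intrM.
Qed.

Lemma in_conv5 (p1 p2 p3 p4 p5 : pt) z :
  in_conv [:: p1; p2; p3; p4; p5] z <->
  exists w1 w2 w3 w4 w5 : rat,
    [/\ 0 <= w1 /\ 0 <= w2 /\ 0 <= w3 /\ 0 <= w4 /\ 0 <= w5,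
        w1 + w2 + w3 + w4 + w5 = 1 &
        w1 *: toQ p1 + w2 *: toQ p2 + w3 *: toQ p3 + w4 *: toQ p4 + w5 *: toQ p5 = z].
Proof.
split.
- case=> w [Hw Hs Hc].
  move: Hs Hc; rewrite !big_ord_recl !big_ord0 /= !addr0 !addrA => Hs Hc.
  do 5 eexists; split; last exact: Hc; last exact: Hs.
  by do !split; apply: Hw.
- case=> w1 [w2 [w3 [w4 [w5 [[H1 [H2 [H3 [H4 H5]]]] Hs Hc]]]]].
  exists (fun i : 'I_5 => nth 0 [:: w1; w2; w3; w4; w5] i); split.
  + by case=> [[|[|[|[|[|k]]]]] Hk] //=.
  + by rewrite !big_ord_recl !big_ord0 /= !addr0 !addrA.
  + by rewrite !big_ord_recl !big_ord0 /= !addr0 !addrA.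
Qed.

Lemma in_conv3 (p1 p2 p3 : pt) z :
  in_conv [:: p1; p2; p3] z <->
  exists w1 w2 w3 : rat,
    [/\ 0 <= w1 /\ 0 <= w2 /\ 0 <= w3,
        w1 + w2 + w3 = 1 &
        w1 *: toQ p1 + w2 *: toQ p2 + w3 *: toQ p3 = z].
Proof.
split.
- case=> w [Hw Hs Hc].
  move: Hs Hc; rewrite !big_ord_recl !big_ord0 /= !addr0 !addrA => Hs Hc.
  do 3 eexists; split; last exact: Hc; last exact: Hs.
  by do !split; apply: Hw.
- case=> w1 [w2 [w3 [[H1 [H2 H3]] Hs Hc]]].
  exists (fun i : 'I_3 => nth 0 [:: w1; w2; w3] i); split.
  + by case=> [[|[|[|k]]] Hk] //=.
  + by rewrite !big_ord_recl !big_ord0 /= !addr0 !addrA.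
  + by rewrite !big_ord_recl !big_ord0 /= !addr0 !addrA.
Qed.

Lemma le_Q (m n : int) : m <= n -> (m%:~R : rat) <= n%:~R.
Proof. by rewrite ler_int. Qed.
Lemma lt_Q (m n : int) : m < n -> (m%:~R : rat) < n%:~R.
Proof. by rewrite ltr_int. Qed.

Definition e1 := mkpt 1 0 0.
Definition e2 := mkpt 0 1 0.
Definition e3 := mkpt (-1) (-1) 0.

Lemma mkptN a b c : - mkpt a b c = mkpt (- a) (- b) (- c).
Proof. by apply: row3P; rewrite !mxE. Qed.

Lemma mkpt_eq a b c a' b' c' : mkpt a b c = mkpt a' b' c' -> c = c'.
Proof. by move=> H; rewrite -(mkpt2 a b c) H mkpt2. Qed.

Lemma rpt_eq a b c a' b' c' : a = a' -> b = b' -> c = c' -> rpt a b c = rpt a' b' c'.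
Proof. by move=> -> -> ->. Qed.

Lemma rpt_lin (w1 w2 w3 w4 w5 : rat) a1 b1 c1 a2 b2 c2 a3 b3 c3 a4 b4 c4 a5 b5 c5 :
  w1 *: rpt a1 b1 c1 + w2 *: rpt a2 b2 c2 + w3 *: rpt a3 b3 c3 + w4 *: rpt a4 b4 c4
  + w5 *: rpt a5 b5 c5 =
  rpt (w1 * a1 + w2 * a2 + w3 * a3 + w4 * a4 + w5 * a5)
      (w1 * b1 + w2 * b2 + w3 * b3 + w4 * b4 + w5 * b5)
      (w1 * c1 + w2 * c2 + w3 * c3 + w4 * c4 + w5 * c5).
Proof. by apply: row3P; rewrite !mxE. Qed.

Section Core3D.
Variables (a b c : int).
Let y := mkpt a b c.
Let S := [:: e1; e2; e3; y; - y].

Lemma bad_pt (u v k : int) (w1 w2 w3 w4 w5 : rat) :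
  (forall z, in_conv S (toQ z) -> z \in S \/ z = 0) ->
  [/\ k != 0, k != c & k != - c] ->
  0 <= w1 -> 0 <= w2 -> 0 <= w3 -> 0 <= w4 -> 0 <= w5 ->
  w1 + w2 + w3 + w4 + w5 = 1 ->
  w1 - w3 + w4 * a%:~R - w5 * a%:~R = u%:~R ->
  w2 - w3 + w4 * b%:~R - w5 * b%:~R = v%:~R ->
  w4 * c%:~R - w5 * c%:~R = k%:~R -> False.
Proof.
move=> HF [hk0 hkc hkc'] h1 h2 h3 h4 h5 hs hx hy hz.
have : in_conv S (toQ (mkpt u v k)).
  apply/in_conv5; exists w1, w2, w3, w4, w5; split => //.
  rewrite /y mkptN !toQ_mkpt rpt_lin; apply: rpt_eq.
  - by rewrite -hx !intrN; ring.
  - by rewrite -hy !intrN; ring.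
  - by rewrite -hz !intrN; ring.
move/HF; rewrite /S /y mkptN !inE /e1 /e2 /e3.
case=> [|H0]; last first.
  by move: hk0; rewrite -(mkpt2 u v k) H0 mxE eqxx.
move=> H; do 4 (case/orP: H => [/eqP/mkpt_eq E|H]; first by move: hk0 hkc hkc'; rewrite E ?eqxx).
by move/eqP/mkpt_eq: H => E; move: hk0 hkc hkc'; rewrite E ?eqxx.
Qed.

Lemma wge0 (N C : rat) : 0 <= N -> 0 < C -> 0 <= N / (3 * C).
Proof. by move=> hN hC; apply: divr_ge0 => //; lra. Qed.

Ltac wg := first [done | (apply: wge0; qlra) | (apply: divr_ge0; qlra)].
Ltac fld := field; do ?split; try done.

Lemma core3D : 0 < c -> 0 <= a < c -> 0 <= b < c ->
  (forall z, in_conv S (toQ z) -> z \in S \/ z = 0) ->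
  [\/ [/\ c = 1, a = 0 & b = 0], [/\ c = 3, a = 1 & b = 2] | [/\ c = 3, a = 2 & b = 1]].
Proof.
move=> hc /andP[ha0 hac] /andP[hb0 hbc] HF.
have [c1|c2] : c = 1 \/ 2 <= c by lia.
  apply: Or31; split; lia.
have nm1 : [/\ (-1 : int) != 0, -1 != c & -1 != - c] by split; lia.
have np1 : [/\ (1 : int) != 0, 1 != c & 1 != - c] by split; lia.
have hA0 : 0 <= (a%:~R : rat) by rewrite ler0z.
have hB0 : 0 <= (b%:~R : rat) by rewrite ler0z.
have hAC : (a%:~R : rat) + 1 <= c%:~R.
  have H : a + 1 <= c by lia.
  by move: H; rewrite -(ler_int rat) intrD.
have hBC : (b%:~R : rat) + 1 <= c%:~R.
  have H : b + 1 <= c by lia.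
  by move: H; rewrite -(ler_int rat) intrD.
have hC2 : ((2:int)%:~R : rat) <= c%:~R by rewrite ler_int.
have hCp : (0 : rat) < c%:~R by rewrite ltr0z.
have hC0 : (c%:~R : rat) != 0 by rewrite lt0r_neq0.
have h1 : c <= a + b.
  case: (leP c (a + b)) => // H; exfalso.
  have : a + b + 1 <= c by lia.
  rewrite -(ler_int rat) !intrD => HQ.
  apply: (@bad_pt 0 0 (-1) ((2 * a%:~R - b%:~R + c%:~R - 1) / (3 * c%:~R))
     ((2 * b%:~R - a%:~R + c%:~R - 1) / (3 * c%:~R))
     ((c%:~R - 1 - a%:~R - b%:~R) / (3 * c%:~R)) 0 (3 / (3 * c%:~R)) HF nm1);
    [wg|wg|wg|wg|wg|fld|fld|fld|fld].
have h2 : a + b <= c.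
  case: (leP (a + b) c) => // H; exfalso.
  have : c + 1 <= a + b by lia.
  rewrite -(ler_int rat) !intrD => HQ.
  apply: (@bad_pt 1 1 1 ((2 * c%:~R - 2 * a%:~R + b%:~R - 1) / (3 * c%:~R))
     ((2 * c%:~R - 2 * b%:~R + a%:~R - 1) / (3 * c%:~R))
     ((a%:~R + b%:~R - c%:~R - 1) / (3 * c%:~R)) (3 / (3 * c%:~R)) 0 HF np1);
    [wg|wg|wg|wg|wg|fld|fld|fld|fld].
have hab : a = c - b by lia.
have hA : (a%:~R : rat) = c%:~R - b%:~R by rewrite hab intrB.
have h3 : c <= 3 * b.
  case: (leP c (3 * b)) => // H; exfalso.
  have : 3 * b + 1 <= c by lia.
  rewrite -(ler_int rat) !intrD intrM => HQ.
  apply: (@bad_pt (-1) 0 (-1) ((c%:~R - 1 - 3 * b%:~R) / (3 * c%:~R))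
     ((c%:~R - 1 + 3 * b%:~R) / (3 * c%:~R))
     ((c%:~R - 1) / (3 * c%:~R)) 0 (3 / (3 * c%:~R)) HF nm1);
    [wg|wg|wg|wg|wg|rewrite ?hA; fld|rewrite ?hA; fld|rewrite ?hA; fld|rewrite ?hA; fld].
have h4 : c <= 3 * a.
  case: (leP c (3 * a)) => // H; exfalso.
  have : 3 * a + 1 <= c by lia.
  rewrite -(ler_int rat) !intrD intrM => HQ.
  apply: (@bad_pt 0 (-1) (-1) ((c%:~R - 1 + 3 * a%:~R) / (3 * c%:~R))
     ((c%:~R - 1 - 3 * a%:~R) / (3 * c%:~R))
     ((c%:~R - 1) / (3 * c%:~R)) 0 (3 / (3 * c%:~R)) HF nm1);
    [wg|wg|wg|wg|wg|rewrite ?hA; fld|rewrite ?hA; fld|rewrite ?hA; fld|rewrite ?hA; fld].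
have h5 : 2 * c <= 3 * a \/ 2 * c <= 3 * b.
  case: (leP (2 * c) (3 * a)) => H; first by left.
  case: (leP (2 * c) (3 * b)) => H'; first by right.
  exfalso.
  have : 3 * a + 1 <= 2 * c by lia.
  rewrite -(ler_int rat) !intrD !intrM => HQ.
  have : 3 * b + 1 <= 2 * c by lia.
  rewrite -(ler_int rat) !intrD !intrM => HQ'.
  apply: (@bad_pt (-1) (-1) (-1) ((2 * c%:~R - 1 - 3 * b%:~R) / (3 * c%:~R))
     ((2 * c%:~R - 1 - 3 * a%:~R) / (3 * c%:~R))
     ((2 * c%:~R - 1) / (3 * c%:~R)) 0 (3 / (3 * c%:~R)) HF nm1);
    [wg|wg|wg|wg|wg|rewrite ?hA; fld|rewrite ?hA; fld|rewrite ?hA; fld|rewrite ?hA; fld].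
case: h5 => h5.
- have hb : a = 2 * b /\ c = 3 * b by lia.
  case: hb => hb hcb.
  have [b1|b2] : b = 1 \/ 2 <= b by lia.
    by constructor 3; split; lia.
  exfalso.
  have K3 : [/\ (3 : int) != 0, 3 != c & 3 != - c] by clear -hcb b2; split; lia.
  have hBQ : ((2:int)%:~R : rat) <= b%:~R by rewrite ler_int.
  have hB' : (b%:~R : rat) != 0 by rewrite intr_eq0; clear -b2; lia.
  apply: (@bad_pt 2 1 3 0 0 0 ((b%:~R + 1) / (2 * b%:~R)) ((b%:~R - 1) / (2 * b%:~R)) HF K3);
    [wg|wg|wg|wg|wg|rewrite ?hb ?hcb ?intrM; fld|rewrite ?hb ?hcb ?intrM; fld|rewrite ?hb ?hcb ?intrM; fld|rewrite ?hb ?hcb ?intrM; fld].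
- have ha : b = 2 * a /\ c = 3 * a by lia.
  case: ha => ha hca.
  have [a1|a2] : a = 1 \/ 2 <= a by lia.
    by constructor 2; split; lia.
  exfalso.
  have K3 : [/\ (3 : int) != 0, 3 != c & 3 != - c] by clear -hca a2; split; lia.
  have hAQ : ((2:int)%:~R : rat) <= a%:~R by rewrite ler_int.
  have hA' : (a%:~R : rat) != 0 by rewrite intr_eq0; clear -a2; lia.
  apply: (@bad_pt 1 2 3 0 0 0 ((a%:~R + 1) / (2 * a%:~R)) ((a%:~R - 1) / (2 * a%:~R)) HF K3);
    [wg|wg|wg|wg|wg|rewrite ?ha ?hca ?intrM; fld|rewrite ?ha ?hca ?intrM; fld|rewrite ?ha ?hca ?intrM; fld|rewrite ?ha ?hca ?intrM; fld].
Qed.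
End Core3D.

Lemma rowE (u v : 'rV[rat]_3) i : u = v -> u 0 i = v 0 i.
Proof. by move=> ->. Qed.

Definition indep (X1 X2 : 'rV[rat]_3) :=
  forall al be : rat, al *: X1 + be *: X2 = 0 -> al = 0 /\ be = 0.

Lemma indep_of_rank (X1 X2 X3 : 'rV[rat]_3) (wa wb wc : rat) :
  0 < wc -> wa *: X1 + wb *: X2 + wc *: X3 = 0 ->
  \rank (col_mx (X2 - X1) (X3 - X1)) = 2%N -> indep X1 X2.
Proof.
move=> hwc hw hr al be hab.
pose K : 'M[rat]_(1 + 1, 1 + 1) :=
  col_mx (row_mx (-1)%:M 1%:M) (row_mx ((- (wa + wc) / wc)%:M) ((- wb / wc)%:M)).
have EK : col_mx (X2 - X1) (X3 - X1) = K *m col_mx X1 X2.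
  rewrite /K mul_col_mx !mul_row_col !mul_scalar_mx.
  congr col_mx; first by rewrite scaleN1r scale1r addrC.
  apply/rowP => i; move: (rowE i hw); rewrite !mxE => h.
  have hwc0 : wc != 0 by rewrite gt_eqF.
  have -> : X3 0 i = - (wa * X1 0 i + wb * X2 0 i) / wc.
    apply: (mulfI hwc0); rewrite [RHS]mulrC divfK //; lra.
  by field.
have hfree : row_free (col_mx X1 X2).
  rewrite /row_free; apply/eqP/anti_leq; rewrite rank_leq_row /=.
  by move: (mxrankM_maxr K (col_mx X1 X2)); rewrite -EK hr.
have : row_mx al%:M be%:M *m col_mx X1 X2 = 0.
  by rewrite mul_row_col !mul_scalar_mx.
move/eqP; rewrite (mulmx_free_eq0 _ hfree) => /eqP H.
split.
- have := congr1 (fun M : 'M[rat]_(1, 1 + 1) => M 0 (lshift 1 0)) H.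
  by rewrite /= row_mxEl !mxE /= mulr1n.
- have := congr1 (fun M : 'M[rat]_(1, 1 + 1) => M 0 (rshift 1 0)) H.
  by rewrite /= row_mxEr !mxE /= mulr1n.
Qed.

Definition tri_data (x1 x2 x3 : pt) (wa wb wc : rat) :=
  [/\ 0 < wa, 0 < wb, 0 < wc, wa + wb + wc = 1 &
      wa *: toQ x1 + wb *: toQ x2 + wc *: toQ x3 = 0].

Definition tri_lat (x1 x2 x3 : pt) :=
  forall z : pt, in_conv [:: x1; x2; x3] (toQ z) -> [\/ z = x1, z = x2, z = x3 | z = 0].

Lemma tri_small x1 x2 x3 wa wb wc :
  tri_data x1 x2 x3 wa wb wc -> indep (toQ x1) (toQ x2) -> tri_lat x1 x2 x3 ->
  forall (s t : rat) z, 0 <= s -> 0 <= t -> s + t <= 1 ->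
  s *: toQ x1 + t *: toQ x2 = toQ z ->
  [\/ s = 0 /\ t = 0, s = 1 /\ t = 0 | s = 0 /\ t = 1].
Proof.
move=> [ha hb hc hs hw] hind hlat s t z h1 h2 h3 hz.
have hr : 0 <= 1 - s - t by lra.
have : in_conv [:: x1; x2; x3] (toQ z).
  apply/in_conv3; exists (s + (1 - s - t) * wa), (t + (1 - s - t) * wb), ((1 - s - t) * wc).
  split.
  - by do !split; rewrite ?addr_ge0 ?mulr_ge0 // ltW.
  - transitivity (s + t + (1 - s - t) * (wa + wb + wc)); first by ring.
    by rewrite hs; ring.
  - apply/rowP => i; move: (rowE i hw) (rowE i hz); rewrite !mxE => e1 e2.
    rewrite -e2.
    transitivity (s * (x1 0 i)%:~R + t * (x2 0 i)%:~R +
       (1 - s - t) * (wa * (x1 0 i)%:~R + wb * (x2 0 i)%:~R + wc * (x3 0 i)%:~R)).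
      by ring.
    by rewrite e1; ring.
case/hlat => ?; subst z.
- have [] := hind (s - 1) t; first by rewrite scalerBl scale1r addrAC hz subrr.
  by move=> hs1 ht; apply: Or32; split; lra.
- have [] := hind s (t - 1); first by rewrite scalerBl scale1r addrA hz subrr.
  by move=> hs1 ht; apply: Or33; split; lra.
- rewrite -hz in hw.
  have [] := hind (wa + wc * s) (wb + wc * t).
    rewrite -[RHS]hw; apply/rowP => i; rewrite !mxE; ring.
  have := mulr_ge0 (ltW hc) h1; lra.
- rewrite toQ0 in hz; have [] := hind s t hz.
  by move=> -> ->; apply: Or31.
Qed.

Lemma tri_core x1 x2 x3 wa wb wc :
  tri_data x1 x2 x3 wa wb wc -> indep (toQ x1) (toQ x2) -> tri_lat x1 x2 x3 ->
  forall (s t : rat) z, 0 <= s < 1 -> 0 <= t < 1 ->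
  s *: toQ x1 + t *: toQ x2 = toQ z -> s = 0 /\ t = 0.
Proof.
move=> hd hind hlat s t z /andP[h1 h1'] /andP[h2 h2'] hz.
have [hst|hst] : s + t <= 1 \/ 1 < s + t by lra.
  by case: (tri_small hd hind hlat h1 h2 hst hz) => [//|[]|[]]; lra.
have h1'' : 0 <= 1 - s by lra.
have h2'' : 0 <= 1 - t by lra.
have hst' : (1 - s) + (1 - t) <= 1 by lra.
have hz' : (1 - s) *: toQ x1 + (1 - t) *: toQ x2 = toQ (x1 + x2 - z).
  rewrite toQB toQD -hz; apply/rowP => i; rewrite !mxE; ring.
by case: (tri_small hd hind hlat h1'' h2'' hst' hz') => [[]|[]|[]]; lra.
Qed.

Lemma tri_int x1 x2 x3 wa wb wc :
  tri_data x1 x2 x3 wa wb wc -> indep (toQ x1) (toQ x2) -> tri_lat x1 x2 x3 ->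
  exists m n : int, [/\ m < 0, n < 0 & x3 = m *: x1 + n *: x2].
Proof.
move=> hd hind hlat; have [ha hb hc hs hw] := hd.
have hwc0 : wc != 0 by rewrite gt_eqF.
pose s := - wa / wc; pose t := - wb / wc.
have hX3 : toQ x3 = s *: toQ x1 + t *: toQ x2.
  apply/rowP => i; move: (rowE i hw); rewrite !mxE => h.
  apply: (mulfI hwc0); rewrite /s /t.
  transitivity (- (wa * (x1 0 i)%:~R + wb * (x2 0 i)%:~R)); first by lra.
  by field.
pose m := Num.floor s; pose n := Num.floor t.
have [hm1 hm2] := andP (floor_itv s).
have [hn1 hn2] := andP (floor_itv t).
have hz : (s - m%:~R) *: toQ x1 + (t - n%:~R) *: toQ x2
          = toQ (x3 - m *: x1 - n *: x2).
  rewrite !toQB !toQZ hX3; apply/rowP => i; rewrite !mxE; ring.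
have [e1 e2] : s - m%:~R = 0 /\ t - n%:~R = 0.
  apply: (tri_core hd hind hlat _ _ hz).
  - by apply/andP; split; move: hm2; rewrite intrD; lra.
  - by apply/andP; split; move: hn2; rewrite intrD; lra.
have hs0 : s < 0 by rewrite /s mulNr oppr_lt0 divr_gt0.
have ht0 : t < 0 by rewrite /t mulNr oppr_lt0 divr_gt0.
exists m, n; split.
- by rewrite -(ltrz0 rat); lra.
- by rewrite -(ltrz0 rat); lra.
- apply: toQ_inj; rewrite toQD !toQZ hX3.
  have -> : s = m%:~R by lra.
  by have -> : t = n%:~R by lra.
Qed.

Lemma indep_int (x1 x2 : pt) (al be : int) :
  indep (toQ x1) (toQ x2) -> al *: x1 + be *: x2 = 0 -> al = 0 /\ be = 0.
Proof.
move=> hi h; have := congr1 toQ h; rewrite toQD !toQZ toQ0 => /hi [].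
by move/eqP; rewrite intr_eq0 => /eqP -> /eqP; rewrite intr_eq0 => /eqP ->.
Qed.

Lemma rowEi (u v : pt) : u = v -> forall i, u 0 i = v 0 i.
Proof. by move=> ->. Qed.

Ltac contra2 hind al be E :=
  match type of hind with indep (toQ ?x1) (toQ ?x2) =>
  have [] := @indep_int _ _ al be hind;
  [apply/rowP; let k := fresh "k" in intro k; move: (rowEi E k); clear -E;
   rewrite !mxE; let a := fresh "a" in let b := fresh "b" in set a := x1 _ k; set b := x2 _ k; clearbody a b; intros; lia |
   let H1 := fresh in let H2 := fresh in intros H1 H2; lia] end.

Lemma tri_m1 x1 x2 x3 wa wb wc :
  tri_data x1 x2 x3 wa wb wc -> indep (toQ x1) (toQ x2) -> tri_lat x1 x2 x3 ->
  x3 = - x1 - x2.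
Proof.
move=> hd hind hlat.
have [m [n [hm hn E]]] := tri_int hd hind hlat.
subst x3.
have hin : forall (z : pt) (l1 l2 l3 : rat), 0 <= l1 -> 0 <= l2 -> 0 <= l3 -> l1 + l2 + l3 = 1 ->
   l1 *: toQ x1 + l2 *: toQ x2 + l3 *: toQ (m *: x1 + n *: x2) = toQ z ->
   [\/ z = x1, z = x2, z = m *: x1 + n *: x2 | z = 0].
  move=> z l1 l2 l3 h1 h2 h3 hs hc; apply: hlat; apply/in_conv3.
  by exists l1, l2, l3; split.
have hM : (m%:~R : rat) <= (-1 : int)%:~R by rewrite ler_int; lia.
have hN : (n%:~R : rat) <= (-1 : int)%:~R by rewrite ler_int; lia.
have [c1|[c2|c3]] : m + 1 <= n \/ n + 1 <= m \/ m = n by lia.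
- exfalso.
  have hMN : (m%:~R : rat) + 1 <= n%:~R by move: c1; rewrite -(ler_int rat) intrD.
  have hD : (1 - m%:~R - n%:~R : rat) != 0.
  by apply/negP => /eqP h; qlra.
  have := hin (- x1) ((n%:~R - m%:~R - 1) / (1 - m%:~R - n%:~R))
     (- 2 * n%:~R / (1 - m%:~R - n%:~R)) (2 / (1 - m%:~R - n%:~R)).
  case.
  + by apply: divr_ge0; qlra.
  + by apply: divr_ge0; qlra.
  + by apply: divr_ge0; qlra.
  + by field; exact: hD.
  + apply/rowP => i; rewrite !mxE !intrD !intrM intrN; field; exact: hD.
  + by move=> E; contra2 hind (2 : int) (0 : int) E.
  + by move=> E; contra2 hind (1 : int) (1 : int) E.
  + by move=> E; contra2 hind ((m + 1) : int) (n : int) E.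
  + by move=> E; contra2 hind (1 : int) (0 : int) E.
- exfalso.
  have hMN : (n%:~R : rat) + 1 <= m%:~R by move: c2; rewrite -(ler_int rat) intrD.
  have hD : (1 - m%:~R - n%:~R : rat) != 0 by apply/negP => /eqP h; qlra.
  have := hin (- x2) (- 2 * m%:~R / (1 - m%:~R - n%:~R))
     ((m%:~R - n%:~R - 1) / (1 - m%:~R - n%:~R)) (2 / (1 - m%:~R - n%:~R)).
  case.
  + by apply: divr_ge0; qlra.
  + by apply: divr_ge0; qlra.
  + by apply: divr_ge0; qlra.
  + by field; exact: hD.
  + apply/rowP => i; rewrite !mxE !intrD !intrM intrN; field; exact: hD.
  + by move=> E; contra2 hind (1 : int) (1 : int) E.
  + by move=> E; contra2 hind (0 : int) (2 : int) E.
  + by move=> E; contra2 hind (m : int) ((n + 1) : int) E.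
  + by move=> E; contra2 hind (0 : int) (1 : int) E.
- subst n.
  have [m1|m2] : m = -1 \/ m <= -2 by lia.
    by subst m; rewrite !scaleN1r.
  exfalso.
  have hM2 : (m%:~R : rat) <= (-2 : int)%:~R by rewrite ler_int; lia.
  have hD : (1 - 2 * m%:~R : rat) != 0 by apply/negP => /eqP h; qlra.
  have := hin (- x1 - x2) (- (m%:~R + 1) / (1 - 2 * m%:~R))
     (- (m%:~R + 1) / (1 - 2 * m%:~R)) (3 / (1 - 2 * m%:~R)).
  case.
  + by apply: divr_ge0; qlra.
  + by apply: divr_ge0; qlra.
  + by apply: divr_ge0; qlra.
  + by field; exact: hD.
  + apply/rowP => i; rewrite !mxE !intrD !intrM !intrN; field; exact: hD.
  + by move=> E; contra2 hind (2 : int) (1 : int) E.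
  + by move=> E; contra2 hind (1 : int) (2 : int) E.
  + by move=> E; contra2 hind ((m + 1) : int) ((m + 1) : int) E.
  + by move=> E; contra2 hind (1 : int) (1 : int) E.
Qed.

Definition mk33 (r0 r1 r2 : pt) : 'M[int]_3 :=
  \matrix_(i < 3, j < 3) (nth 0 [:: r0; r1; r2] i) 0 j.

Lemma mul33 (R : pzRingType) m (A : 'M[R]_(m, 3)) (B : 'M[R]_3) i j :
  (A *m B) i j = A i i0 * B i0 j + A i i1 * B i1 j + A i i2 * B i2 j.
Proof.
rewrite mxE !big_ord_recl big_ord0 addr0 addrA.
have -> : lift ord0 ord0 = i1 :> 'I_3 by apply: val_inj.
have -> : lift ord0 (lift ord0 ord0) = i2 :> 'I_3 by apply: val_inj.
by have -> : ord0 = i0 :> 'I_3 by apply: val_inj.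
Qed.

Lemma mul_mk33 (x r0 r1 r2 : pt) :
  x *m mk33 r0 r1 r2 = x 0 i0 *: r0 + x 0 i1 *: r1 + x 0 i2 *: r2.
Proof. by apply/rowP => j; rewrite mul3 !mxE. Qed.

Lemma mk33_mul (r0 r1 r2 : pt) (B : 'M[int]_3) :
  mk33 r0 r1 r2 *m B = mk33 (r0 *m B) (r1 *m B) (r2 *m B).
Proof.
apply/matrixP => i j; rewrite mul33 [RHS]mxE.
by elim/ord3P: i; rewrite /= mul3 !mxE.
Qed.

Lemma mk33_id : mk33 e1 e2 (mkpt 0 0 1) = 1%:M.
Proof.
by apply/matrixP => i j; elim/ord3P: i; elim/ord3P: j; rewrite !mxE.
Qed.

Lemma divQ (m P : int) : P != 0 -> (P %| m)%Z -> ((m %/ P)%Z%:~R : rat) = m%:~R / P%:~R.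
Proof. by move=> hP hd; rewrite -{2}(divzK hd) intrM mulfK // intr_eq0. Qed.

Lemma frac_bounds (r P : int) : 0 <= r < P -> 0 <= (r%:~R : rat) / P%:~R < 1.
Proof.
move=> /andP[h1 h2]; have hP : (0 : rat) < P%:~R by rewrite ltr0z; lia.
apply/andP; split; first by apply: divr_ge0; rewrite ?ler0z //; lia.
by rewrite ltr_pdivrMr // mul1r ltr_int.
Qed.

Lemma mod_contra x1 x2 x3 wa wb wc :
  tri_data x1 x2 x3 wa wb wc -> indep (toQ x1) (toQ x2) -> tri_lat x1 x2 x3 ->
  forall (s t : int) (P : int), 0 < P ->
  (forall j : 'I_3, (s * x1 0 j + t * x2 0 j) \in dvdz P) -> (P %| s)%Z /\ (P %| t)%Z.
Proof.
move=> hd hind hlat s t P hP hdiv.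
have hP0 : P != 0 by rewrite gt_eqF.
have [s' Es'] : {s' | s' = (s %% P)%Z} by eexists.
have [t' Et'] : {t' | t' = (t %% P)%Z} by eexists.
have hdiv' : forall j : 'I_3, (s' * x1 0 j + t' * x2 0 j) \in dvdz P.
  move=> j.
  have Es := divz_eq s P; have Et := divz_eq t P.
  set q := (s %/ P)%Z in Es; set r := (t %/ P)%Z in Et.
  have -> : s' * x1 0 j + t' * x2 0 j =
            (s * x1 0 j + t * x2 0 j) - P * (q * x1 0 j + r * x2 0 j).
    rewrite [in RHS]Es [in RHS]Et Es' Et'; ring.
  by apply: rpredB; [exact: hdiv | apply: dvdz_mulr; exact: dvdzz].
pose f (j : 'I_3) := divz (s' * x1 0 j + t' * x2 0 j) P.
pose z : pt := mkpt (f i0) (f i1) (f i2).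
have hz : (s'%:~R / P%:~R) *: toQ x1 + (t'%:~R / P%:~R) *: toQ x2 = toQ z.
  have hP0' : (P%:~R : rat) != 0 by rewrite intr_eq0.
  rewrite /z toQ_mkpt /f !divQ ?hdiv' //; apply: row3P; rewrite !mxE /= !intrD !intrM; field; exact: hP0'.
have hs' : 0 <= s' < P by rewrite Es'; lia.
have ht' : 0 <= t' < P by rewrite Et'; lia.
have [e1 e2] := tri_core hd hind hlat (frac_bounds hs') (frac_bounds ht') hz.
have hP0' : (P%:~R : rat) != 0 by rewrite intr_eq0.
split; apply/dvdz_mod0P; rewrite -?Es' -?Et'.
- by move/eqP: e1; rewrite mulf_eq0 invr_eq0 (negPf hP0') orbF intr_eq0 => /eqP.
- by move/eqP: e2; rewrite mulf_eq0 invr_eq0 (negPf hP0') orbF intr_eq0 => /eqP.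
Qed.

Lemma tri_basis x1 x2 x3 : fano_triangle x1 x2 x3 ->
  exists A1 : 'M[int]_3, [/\ A1 \in unitmx, x1 *m A1 = e1, x2 *m A1 = e2 & x3 *m A1 = e3].
Proof.
case=> hr _ [wa [wb [wc [ha hb hc hs hw]]]] hlat.
have hd : tri_data x1 x2 x3 wa wb wc by split.
have hind := indep_of_rank hc hw hr.
have hx3 := tri_m1 hd hind hlat.
pose n0 := x1 0 i1 * x2 0 i2 - x1 0 i2 * x2 0 i1.
pose n1 := x1 0 i2 * x2 0 i0 - x1 0 i0 * x2 0 i2.
pose n2 := x1 0 i0 * x2 0 i1 - x1 0 i1 * x2 0 i0.
have noP : forall P : int, 1 < P -> ~ [/\ (P %| n0)%Z, (P %| n1)%Z & (P %| n2)%Z].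
  move=> P hP [d0 d1 d2].
  have hP0 : 0 < P by lia.
  have hnP1 : ~~ (P %| 1)%Z by rewrite dvdz1; lia.
  case: (boolP (x1 0 i0 \in dvdz P)) => h0; last first.
    have hj : forall j : 'I_3, (x2 0 i0 * x1 0 j + - x1 0 i0 * x2 0 j) \in dvdz P.
      elim/ord3P.
      - by rewrite (_ : _ + _ = 0); [exact: dvdz0 | ring].
      - by rewrite (_ : _ + _ = - n2); [rewrite rpredN | rewrite /n2; ring].
      - by rewrite (_ : _ + _ = n1); [ | rewrite /n1; ring].
    have [_ ht] := mod_contra hd hind hlat hP0 hj.
    by move: ht; rewrite rpredN (negPf h0).
  case: (boolP (x1 0 i1 \in dvdz P)) => h1; last first.
    have hj : forall j : 'I_3, (x2 0 i1 * x1 0 j + - x1 0 i1 * x2 0 j) \in dvdz P.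
      elim/ord3P.
      - by rewrite (_ : _ + _ = n2); [ | rewrite /n2; ring].
      - by rewrite (_ : _ + _ = 0); [exact: dvdz0 | ring].
      - by rewrite (_ : _ + _ = - n0); [rewrite rpredN | rewrite /n0; ring].
    have [_ ht] := mod_contra hd hind hlat hP0 hj.
    by move: ht; rewrite rpredN (negPf h1).
  case: (boolP (x1 0 i2 \in dvdz P)) => h2; last first.
    have hj : forall j : 'I_3, (x2 0 i2 * x1 0 j + - x1 0 i2 * x2 0 j) \in dvdz P.
      elim/ord3P.
      - by rewrite (_ : _ + _ = - n1); [rewrite rpredN | rewrite /n1; ring].
      - by rewrite (_ : _ + _ = n0); [ | rewrite /n0; ring].
      - by rewrite (_ : _ + _ = 0); [exact: dvdz0 | ring].
    have [_ ht] := mod_contra hd hind hlat hP0 hj.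
    by move: ht; rewrite rpredN (negPf h2).
  have hj : forall j : 'I_3, (1 * x1 0 j + 0 * x2 0 j) \in dvdz P.
    by elim/ord3P; rewrite mul1r mul0r addr0.
  have [hs1 _] := mod_contra hd hind hlat hP0 hj.
  by move: hnP1; rewrite hs1.
have hg : gcdz n0 (gcdz n1 n2) = 1.
  case Ek : (gcdz n0 (gcdz n1 n2)) => [k|k]; last by rewrite /gcdz in Ek.
  have [k0|[k1|k2]] : k = 0%N \/ k = 1%N \/ (1 < k)%N by lia.
  - exfalso; subst k; move/eqP: Ek; rewrite gcdz_eq0 gcdz_eq0 => /and3P[/eqP e0 /eqP e1 /eqP e2].
    by apply: (noP 2) => //; rewrite e0 e1 e2 dvdz0.
  - by rewrite k1.
  - exfalso; have pp := pdiv_prime k2.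
    have hPg : ((pdiv k)%:Z %| gcdz n0 (gcdz n1 n2))%Z by rewrite dvdzE Ek /= pdiv_dvd.
    move: hPg; rewrite !dvdz_gcd => /and3P[q0 q1 q2].
    by apply: (noP (pdiv k)%:Z) => //; rewrite ltz_nat prime_gt1.
case: (Bezoutz n0 (gcdz n1 n2)) => u [v huv].
case: (Bezoutz n1 n2) => u' [v' huv'].
rewrite hg -huv' in huv.
pose w := mkpt u (v * u') (v * v').
have Hnw : n0 * u + n1 * (v * u') + n2 * (v * v') = 1 by rewrite -huv; ring.
pose A1 := mk33
  (mkpt (x2 0 i1 * w 0 i2 - x2 0 i2 * w 0 i1) (w 0 i1 * x1 0 i2 - w 0 i2 * x1 0 i1) n0)
  (mkpt (x2 0 i2 * w 0 i0 - x2 0 i0 * w 0 i2) (w 0 i2 * x1 0 i0 - w 0 i0 * x1 0 i2) n1)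
  (mkpt (x2 0 i0 * w 0 i1 - x2 0 i1 * w 0 i0) (w 0 i0 * x1 0 i1 - w 0 i1 * x1 0 i0) n2).
have E1 : x1 *m A1 = e1.
  rewrite /A1 mul_mk33; apply: row3P; rewrite !mxE /=.
  - by rewrite -Hnw /w /n0 /n1 /n2 ?mxE /=; ring.
  - by ring.
  - by rewrite /n0 /n1 /n2; ring.
have E2 : x2 *m A1 = e2.
  rewrite /A1 mul_mk33; apply: row3P; rewrite !mxE /=.
  - by ring.
  - by rewrite -Hnw /w /n0 /n1 /n2 ?mxE /=; ring.
  - by rewrite /n0 /n1 /n2; ring.
have E3 : w *m A1 = mkpt 0 0 1.
  rewrite /A1 mul_mk33; apply: row3P; rewrite !mxE /=.
  - by ring.
  - by ring.
  - by rewrite -Hnw /w /n0 /n1 /n2 ?mxE /=; ring.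
exists A1; split => //.
- have : mk33 x1 x2 w *m A1 = 1%:M by rewrite mk33_mul E1 E2 E3 mk33_id.
  by case/mulmx1_unit.
- rewrite hx3 mulmxBl mulNmx E1 E2; apply: row3P; rewrite !mxE /=; ring.
Qed.

Lemma toQm_mul (A B : 'M[int]_3) : toQm (A *m B) = toQm A *m toQm B.
Proof. by apply/matrixP => i j; rewrite [LHS]mxE !mul33 !mxE !intrD !intrM. Qed.

Lemma toQm1 : toQm 1%:M = 1%:M.
Proof. by apply/matrixP => i j; rewrite !mxE; case: eqP. Qed.

Lemma fano_map (p1 p2 p3 p4 p5 : pt) (A : 'M[int]_3) : A \in unitmx ->
  (forall z, in_conv [:: p1; p2; p3; p4; p5] (toQ z) -> z \in [:: p1; p2; p3; p4; p5] \/ z = 0) ->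
  forall z, in_conv [:: p1 *m A; p2 *m A; p3 *m A; p4 *m A; p5 *m A] (toQ z) ->
    z \in [:: p1 *m A; p2 *m A; p3 *m A; p4 *m A; p5 *m A] \/ z = 0.
Proof.
move=> hA HF z /in_conv5 [w1 [w2 [w3 [w4 [w5 [hw hs hc]]]]]].
have : in_conv [:: p1; p2; p3; p4; p5] (toQ (z *m invmx A)).
  apply/in_conv5; exists w1, w2, w3, w4, w5; split => //.
  rewrite toQ_mul -hc !mulmxDl -!scalemxAl !toQ_mul -!mulmxA -toQm_mul mulmxV //.
  by rewrite toQm1 !mulmx1.
case/HF => H.
- left; have := map_f (fun x => x *m A) H; rewrite /= mulmxKV //.
- by right; rewrite -(mulmxKV hA z) H mul0mx.
Qed.

Lemma conv_map (p1 p2 p3 p4 p5 : pt) (A : 'M[int]_3) v :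
  in_conv [:: p1; p2; p3; p4; p5] v ->
  in_conv [:: p1 *m A; p2 *m A; p3 *m A; p4 *m A; p5 *m A] (v *m toQm A).
Proof.
move=> /in_conv5 [w1 [w2 [w3 [w4 [w5 [hw hs hc]]]]]].
apply/in_conv5; exists w1, w2, w3, w4, w5; split => //.
by rewrite -hc !mulmxDl -!scalemxAl !toQ_mul.
Qed.

Lemma shear_unit (k l s : int) : s = 1 \/ s = -1 -> mk33 e1 e2 (mkpt k l s) \in unitmx.
Proof.
move=> hs.
have : mk33 e1 e2 (mkpt k l s) *m mk33 e1 e2 (mkpt (- k * s) (- l * s) s) = 1%:M.
  rewrite mk33_mul -mk33_id !mul_mk33.
  congr mk33; apply: row3P; rewrite !mxE /=; case: hs => ->; ring.
by case/mulmx1_unit.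
Qed.

Lemma shear_e1 (k l s : int) : e1 *m mk33 e1 e2 (mkpt k l s) = e1.
Proof. by rewrite mul_mk33; apply: row3P; rewrite !mxE /=; ring. Qed.
Lemma shear_e2 (k l s : int) : e2 *m mk33 e1 e2 (mkpt k l s) = e2.
Proof. by rewrite mul_mk33; apply: row3P; rewrite !mxE /=; ring. Qed.
Lemma shear_e3 (k l s : int) : e3 *m mk33 e1 e2 (mkpt k l s) = e3.
Proof. by rewrite mul_mk33; apply: row3P; rewrite !mxE /=; ring. Qed.
Lemma shear_y (a b c k l s : int) :
  mkpt a b c *m mk33 e1 e2 (mkpt k l s) = mkpt (a + c * k) (b + c * l) (c * s).
Proof. by rewrite mul_mk33; apply: row3P; rewrite !mxE /=; ring. Qed.

Lemma comb_entry (w1 w2 w3 w4 w5 : rat) (X1 X2 X3 X4 X5 : 'rV[rat]_3) i :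
  (w1 *: X1 + w2 *: X2 + w3 *: X3 + w4 *: X4 + w5 *: X5) 0 i =
  w1 * X1 0 i + w2 * X2 0 i + w3 * X3 0 i + w4 * X4 0 i + w5 * X5 0 i.
Proof. by rewrite !mxE. Qed.

Lemma interior_c (p1 p2 p3 p4 p5 : pt) (A : 'M[int]_3) : A \in unitmx ->
  in_interior [:: p1; p2; p3; p4; p5] 0 ->
  ~ [/\ (p1 *m A) 0 i2 = 0, (p2 *m A) 0 i2 = 0, (p3 *m A) 0 i2 = 0,
        (p4 *m A) 0 i2 = 0 & (p5 *m A) 0 i2 = 0].
Proof.
move=> hA [eps [heps Hv]] [h1 h2 h3 h4 h5].
pose r := mkpt 0 0 1 *m invmx A.
pose D : rat := 1 + `|(r 0 i0)%:~R| + `|(r 0 i1)%:~R| + `|(r 0 i2)%:~R|.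
have hD : 0 < D.
  have := normr_ge0 ((r 0 i0)%:~R : rat); have := normr_ge0 ((r 0 i1)%:~R : rat).
  have := normr_ge0 ((r 0 i2)%:~R : rat); rewrite /D; lra.
pose d := eps / D.
have hd : 0 < d by rewrite /d divr_gt0.
pose v := d *: toQ r.
have hv : forall i, `|v 0 i| <= eps.
  move=> i; rewrite /v mxE toQE normrM (gtr0_norm hd).
  have hRi : `|((r 0 i)%:~R : rat)| <= D.
    have := normr_ge0 ((r 0 i0)%:~R : rat); have := normr_ge0 ((r 0 i1)%:~R : rat).
    have := normr_ge0 ((r 0 i2)%:~R : rat); rewrite /D.
    by elim/ord3P: i => *; lra.
  apply: le_trans (ler_wpM2l (ltW hd) hRi) _.
  by rewrite /d divfK ?gt_eqF.
have := Hv v hv; rewrite add0r => /(conv_map A) /in_conv5 [w1 [w2 [w3 [w4 [w5 [hw hs hc]]]]]].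
have := congr1 (fun u : 'rV[rat]_3 => u 0 i2) hc; rewrite /=.
rewrite comb_entry !toQE h1 h2 h3 h4 h5 /v -scalemxAl -toQ_mul /r mulmxKV // mxE toQE mkpt2.
move=> H; clear -H hd; lra.
Qed.

Lemma conv_swap45 (p1 p2 p3 p4 p5 : pt) z :
  in_conv [:: p1; p2; p3; p4; p5] z <-> in_conv [:: p1; p2; p3; p5; p4] z.
Proof.
split => /in_conv5 [w1 [w2 [w3 [w4 [w5 [[h1 [h2 [h3 [h4 h5]]]] hs hc]]]]]];
  apply/in_conv5; exists w1, w2, w3, w5, w4; split.
- by do !split.
- by rewrite -hs addrAC.
- by rewrite -hc addrAC.
- by do !split.
- by rewrite -hs addrAC.
- by rewrite -hc addrAC.
Qed.

Lemma mkpt_congr (a b c a' b' c' : int) :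
  a = a' -> b = b' -> c = c' -> mkpt a b c = mkpt a' b' c'.
Proof. by move=> -> -> ->. Qed.

Unset Implicit Arguments.

Theorem lemma4p4 (x1 x2 x3 y1 : 'rV[int]_3) :
  minimal_fano [:: x1; x2; x3; y1; - y1] ->
  fano_triangle x1 x2 x3 ->
  exists A : 'M[int]_3, A \in unitmx /\
    ((forall z : 'rV[rat]_3,
        in_conv (actGL A [:: x1; x2; x3; y1; - y1]) z <-> in_conv P1 z) \/
     (forall z : 'rV[rat]_3,
        in_conv (actGL A [:: x1; x2; x3; y1; - y1]) z <-> in_conv P2 z)).
Proof.
move=> [[_ HF Hint] _] Htri.
have [A1 [hA1 E1 E2 E3]] := tri_basis Htri.
pose Y := y1 *m A1.
have hc : Y 0 i2 != 0.
  apply/eqP => h; apply: (interior_c hA1 Hint); split.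
  - by rewrite E1 /e1 mkpt2.
  - by rewrite E2 /e2 mkpt2.
  - by rewrite E3 /e3 mkpt2.
  - exact: h.
  - by rewrite mulNmx mxE -/Y h oppr0.
pose a := Y 0 i0; pose b := Y 0 i1; pose c := Y 0 i2.
have hY : Y = mkpt a b c := ptE Y.
pose s : int := if 0 < c then 1 else -1.
have hs : s = 1 \/ s = -1 by rewrite /s; case: ifP; auto.
pose A2 := mk33 e1 e2 (mkpt (- (a %/ c)%Z) (- (b %/ c)%Z) s).
pose A := A1 *m A2.
have hA : A \in unitmx by rewrite unitmx_mul hA1 shear_unit.
have [a' [b' [c' [hlist [hc' ha' hb']]]]] : exists a' b' c' : int,
    actGL A [:: x1; x2; x3; y1; - y1] = [:: e1; e2; e3; mkpt a' b' c'; - mkpt a' b' c']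
    /\ [/\ 0 < c', 0 <= a' < c' & 0 <= b' < c'].
  exists (a %% c)%Z, (b %% c)%Z, (c * s).
  split.
  - rewrite /actGL /= /A !mulmxA E1 E2 E3 !mulNmx -/Y hY /A2.
    rewrite shear_e1 shear_e2 shear_e3 shear_y.
    have Ea := divz_eq a c; have Eb := divz_eq b c.
    have -> : a + c * - (a %/ c)%Z = (a %% c)%Z by lia.
    by have -> : b + c * - (b %/ c)%Z = (b %% c)%Z by lia.
  - have hc0 : c != 0 := hc.
    have := modz_ge0 a hc0; have := ltz_mod a hc0.
    have := modz_ge0 b hc0; have := ltz_mod b hc0.
    rewrite /s; case: ifP => hcp; rewrite ?mulr1 ?mulrN1 => *; split; lia.
have HF' := fano_map hA HF.
rewrite /= in HF'.
have HF'' : forall z, in_conv [:: e1; e2; e3; mkpt a' b' c'; - mkpt a' b' c'] (toQ z) ->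
    z \in [:: e1; e2; e3; mkpt a' b' c'; - mkpt a' b' c'] \/ z = 0.
  by move: hlist; rewrite /actGL /= => <-.
case: (core3D hc' ha' hb' HF'') => [[e e' e'']|[e e' e'']|[e e' e'']]; subst a' b' c'.
- exists A; split => //; left => z.
  by rewrite hlist /P1 mkptN !oppr0.
- exists A; split => //; right => z.
  by rewrite hlist /P2 mkptN.
- pose A3 := mk33 e1 e2 (mkpt (-1) (-1) (-1)).
  exists (A *m A3); split.
    by rewrite unitmx_mul hA shear_unit //; right.
  right => z.
  have hl : actGL (A *m A3) [:: x1; x2; x3; y1; - y1] =
            [:: e1; e2; e3; mkpt (-1) (-2) (-3); mkpt 1 2 3].
    move: hlist; rewrite /actGL /= => -[h1 h2 h3 h4 h5].
    have hm : forall x, x *m (A *m A3) = (x *m A) *m A3 := fun x => mulmxA x A A3.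
    rewrite !hm h1 h2 h3 h4 h5 mkptN /A3 shear_e1 shear_e2 shear_e3 !shear_y.
    congr [:: _; _; _; _; _].
  by rewrite hl /P2 conv_swap45.
Qed.
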